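(* Let $\kappa$ be an uncountable regular cardinal, $U$ an unbounded subset of $\kappa$, and $T$ a subtree of ${}^{<\kappa}\kappa$. If $\mu$ is a cardinal with $\mu^{<\kappa}<|[T]|$ and $c:{}^\kappa\mu\to[T]$ is a continuous surjection, then there are a strictly increasing sequence $\langle\lambda_n\in U : n<\omega\rangle$ with least upper bound $\lambda$ and an injection $i:\prod_{n<\omega}\lambda_n\to T(\lambda)$ such that for all $x,y\in\prod_{n<\omega}\lambda_n$ and all $n<\omega$: $x\restriction n=y\restriction n$ if and only if $i(x)\restriction\lambda_n=i(y)\restriction\lambda_n$.
   Context: ${}^{<\kappa}\kappa$ is the set of functions from ordinals $\alpha<\kappa$ to $\kappa$, ordered by inclusion; a subtree is a subset closed under restrictions to smaller ordinals. $[T]$ is the set of $x\in{}^\kappa\kappa$ with $x\restriction\alpha\in T$ for all $\alpha<\kappa$, with the subspace topology of ${}^\kappa\kappa$. $T(\lambda)$ denotes the set of nodes of $T$ of length $\lambda$. For a cardinal $\nu$, ${}^\kappa\nu$ carries the topology with basic open sets $N_s=\{x\in{}^\kappa\nu : s\subseteq x\}$ for $s$ a function from an ordinal below $\kappa$ to $\nu$. *)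

(* Defs.v *)
(* Generalized Baire spaces over an abstract well-ordered type K
   representing the (initial) ordinal kappa; elements of K are the ordinals < kappa. *)
From Stdlib Require Import Classical.
Set Implicit Arguments.

Section Defs.
Variable K : Type.
Variable lt : K -> K -> Prop.

Definition le (a b : K) : Prop := lt a b \/ a = b.

Definition strict_well_order : Prop :=
  (forall a, ~ lt a a) /\
  (forall a b c, lt a b -> lt b c -> lt a c) /\
  (forall a b, lt a b \/ a = b \/ lt b a) /\
  well_founded lt.

Definition seg (a : K) : Type := { b : K | lt b a }.

Definition le_card (A B : Type) : Prop :=
  exists f : A -> B, forall x y, f x = f y -> x = y.
Definition lt_card (A B : Type) : Prop := le_card A B /\ ~ le_card B A.

Definition is_cardinal : Prop := forall a : K, ~ le_card K (seg a).
Definition uncountable : Prop := ~ le_card K nat.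
Definition regular : Prop :=
  forall (a : K) (f : seg a -> K), exists g : K, forall b, lt (f b) g.

Definition uncountable_regular_cardinal : Prop :=
  strict_well_order /\ is_cardinal /\ uncountable /\ regular.

Definition unbounded (U : K -> Prop) : Prop := forall a, exists b, U b /\ lt a b.

(* nodes of {}^{<kappa} X: functions from an ordinal alpha < kappa to X *)
Definition node (X : Type) : Type := { a : K & seg a -> X }.
Definition len {X} (s : node X) : K := projT1 s.
Definition val {X} (s : node X) : seg (len s) -> X := projT2 s.

Definition prefix {X} (t s : node X) : Prop :=
  le (len t) (len s) /\
  forall c (h1 : lt c (len t)) (h2 : lt c (len s)),
    val t (exist _ c h1) = val s (exist _ c h2).

Definition restr {X} (x : K -> X) (a : K) : node X :=
  existT (fun a => seg a -> X) a (fun b => x (proj1_sig b)).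

Definition subtree (T : node K -> Prop) : Prop :=
  forall s t, prefix t s -> T s -> T t.

Definition branches (T : node K -> Prop) : Type :=
  { x : K -> K | forall a, T (restr x a) }.

Definition N {X} (s : node X) (y : K -> X) : Prop :=
  forall c (h : lt c (len s)), val s (exist _ c h) = y c.

Definition open {X} (V : (K -> X) -> Prop) : Prop :=
  forall x, V x -> exists s : node X, N s x /\ (forall y, N s y -> V y).

(* continuity of c : {}^kappa M -> [T], [T] carrying the subspace topology of
   {}^kappa kappa: preimages of (traces on [T] of) open sets are open *)
Definition continuous {M} {T : node K -> Prop} (c : (K -> M) -> branches T) : Prop :=
  forall V : (K -> K) -> Prop, open V -> open (fun z => V (proj1_sig (c z))).

End Defs.

(* Main.v *)
Require Import Defs.
From Stdlib Require Import Classical ClassicalEpsilon FunctionalExtensionality ProofIrrelevance PropExtensionality Lia Arith PeanoNat.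

Section Ord.
Context {K : Type}.
Context {lt : K -> K -> Prop}.
Hypothesis Hwo : strict_well_order lt.

Lemma lt_irr a : ~ lt a a. Proof. apply (proj1 Hwo). Qed.
Lemma lt_tr a b c : lt a b -> lt b c -> lt a c. Proof. apply (proj1 (proj2 Hwo)). Qed.
Lemma lt_tri a b : lt a b \/ a = b \/ lt b a. Proof. apply (proj1 (proj2 (proj2 Hwo))). Qed.
Lemma lt_wf : well_founded lt. Proof. apply (proj2 (proj2 (proj2 Hwo))). Qed.

Lemma le_refl a : le lt a a. Proof. right; reflexivity. Qed.
Lemma lt_le_tr a b c : lt a b -> le lt b c -> lt a c.
Proof. intros H [H'| <-]; [eapply lt_tr; eauto | auto]. Qed.
Lemma le_lt_tr a b c : le lt a b -> lt b c -> lt a c.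
Proof. intros [H| ->] H'; [eapply lt_tr; eauto | auto]. Qed.
Lemma le_tr a b c : le lt a b -> le lt b c -> le lt a c.
Proof. intros [H| ->] H'; [left; eapply lt_le_tr; eauto | auto]. Qed.
Lemma not_lt_le a b : ~ lt a b -> le lt b a.
Proof. intros H. destruct (lt_tri a b) as [h|[h|h]]; [tauto| right; auto | left; auto]. Qed.
Lemma le_not_lt a b : le lt a b -> ~ lt b a.
Proof. intros H H'. apply (lt_irr a). eapply le_lt_tr; eauto. Qed.
Lemma le_antisym a b : le lt a b -> le lt b a -> a = b.
Proof. intros [H|H] H'; auto. exfalso. apply (le_not_lt _ _ H' H). Qed.
Lemma lt_neq a b : lt a b -> a <> b.
Proof. intros H ->. apply (lt_irr _ H). Qed.

Lemma min_ex (P : K -> Prop) : (exists a, P a) -> exists a, P a /\ forall b, P b -> le lt a b.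
Proof.
  intros [a Ha]. apply NNPP; intro Hn.
  assert (forall x, ~ P x).
  { intro x. induction x as [x IH] using (well_founded_ind lt_wf).
    intro Px. apply Hn. exists x. split; auto. intros b Pb.
    apply not_lt_le. intro hb. apply (IH b hb Pb). }
  eapply H; eauto.
Qed.

Lemma max_ex a b : exists m, le lt a m /\ le lt b m.
Proof.
  destruct (lt_tri a b) as [h|[h|h]].
  - exists b; split; [left; auto| apply le_refl].
  - subst; exists b; split; apply le_refl.
  - exists a; split; [apply le_refl| left; auto].
Qed.

Lemma node_eq {X} (u v : node lt X) : len u = len v ->
  (forall c h h', val u (exist _ c h) = val v (exist _ c h')) -> u = v.
Proof.
  destruct u as [a f], v as [b g]; unfold len, val; simpl. intros <- H.
  f_equal. apply functional_extensionality. intros [c h]. apply H.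
Qed.

Lemma prefix_trans {X} (u v w : node lt X) : prefix u v -> prefix v w -> prefix u w.
Proof.
  intros [H1 H2] [H3 H4]. split. exact (le_tr _ _ _ H1 H3).
  intros c h1 h2. assert (h: lt c (len v)) by (exact (lt_le_tr _ _ _ h1 H1)).
  rewrite (H2 c h1 h). apply H4.
Qed.

Lemma N_restr {X} (z : K -> X) b : N (restr lt z b) z.
Proof. intros c h. reflexivity. Qed.

Lemma N_prefix {X} (t : node lt X) z b : N t z -> le lt (len t) b -> prefix t (restr lt z b).
Proof. intros H Hb. split; [exact Hb|]. intros c h1 h2. apply H. Qed.

Lemma prefix_restr_eq {X} (u : node lt X) z b : prefix u (restr lt z b) -> u = restr lt z (len u).
Proof.
  intros [H1 H2]. apply node_eq; auto. intros c h h'.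
  rewrite (H2 c h (lt_le_tr _ _ _ h H1)). reflexivity.
Qed.

Lemma N_eq_restr {X} (u : node lt X) z : N u z -> u = restr lt z (len u).
Proof. intros H. apply node_eq; [reflexivity|]. intros c h h'. apply H. Qed.

Lemma prefix_common {X} (u v w : node lt X) : prefix u w -> prefix v w -> le lt (len u) (len v) -> prefix u v.
Proof.
  intros [H1 H2] [H3 H4] Hl. split; [exact Hl|]. intros c h1 h2.
  rewrite (H2 c h1 (lt_le_tr _ _ _ h2 H3)). rewrite (H4 c h2 (lt_le_tr _ _ _ h2 H3)). reflexivity.
Qed.

Lemma N_shorter {X} (z z' : K -> X) a b : le lt a b -> N (restr lt z b) z' -> N (restr lt z a) z'.
Proof. intros Hab H c h. apply (H c (lt_le_tr _ _ _ h Hab)). Qed.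

Lemma wf_choice {A} (inh : A) (P : K -> (K -> A) -> A -> Prop) :
  (forall a h h' v, (forall b, lt b a -> h b = h' b) -> P a h v -> P a h' v) ->
  (forall a h, exists v, P a h v) ->
  exists F : K -> A, forall a, P a F (F a).
Proof.
  intros Hdep Hex.
  pose (ext := fun a (rec : forall b, lt b a -> A) (b : K) =>
          match excluded_middle_informative (lt b a) with left p => rec b p | right _ => inh end).
  pose (F := Fix lt_wf (fun _ => A) (fun a rec => epsilon (inhabits inh) (P a (ext a rec)))).
  exists F. intro a.
  assert (E : F a = epsilon (inhabits inh) (P a (ext a (fun b _ => F b)))).
  { unfold F at 1. rewrite Fix_eq. reflexivity.
    intros x f g Hfg. f_equal. f_equal. unfold ext. apply functional_extensionality.
    intro b. destruct (excluded_middle_informative (lt b x)); auto. }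
  rewrite E. eapply Hdep; [|apply epsilon_spec, Hex].
  intros b hb. unfold ext. destruct (excluded_middle_informative (lt b a)); tauto.
Qed.

End Ord.

Lemma cid_fun {A B} (R : A -> B -> Prop) : (forall a, exists b, R a b) -> exists f, forall a, R a (f a).
Proof. intros H. exists (fun a => proj1_sig (constructive_indefinite_description _ (H a))).
  intro a. exact (proj2_sig (constructive_indefinite_description _ (H a))). Qed.

Section Main.
Variable K : Type.
Variable lt : K -> K -> Prop.
Hypothesis Hwo : strict_well_order lt.
Hypothesis Hreg : regular lt.
Hypothesis Hunc : uncountable K.
Variable U : K -> Prop.
Hypothesis HU : unbounded lt U.
Variable T : node lt K -> Prop.
Variable M : Type.
Hypothesis Hcard : lt_card (node lt M) (branches T).
Variable c : (K -> M) -> branches T.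
Hypothesis Hc : continuous c.
Hypothesis Hsurj : forall b : branches T, exists z, c z = b.

Definition cz (z : K -> M) : K -> K := proj1_sig (c z).
Definition Im (u : node lt M) (y : K -> K) := exists z, N u z /\ cz z = y.
Definition bad (u : node lt M) := exists g : (K -> K) -> node lt M,
  (forall y y', Im u y -> Im u y' -> g y = g y' -> y = y') /\ (forall y, Im u y -> prefix u (g y)).
Definition good u := ~ bad u.
Definition Gd (t : node lt M) (y : K -> K) :=
  exists z, N t z /\ cz z = y /\ forall b, le lt (len t) b -> good (restr lt z b).

Lemma inhK : inhabited K.
Proof.
  apply NNPP; intro H. apply Hunc. exists (fun k => False_rect nat (H (inhabits k))).
  intros x. exfalso. exact (H (inhabits x)).
Qed.

Lemma k0_ex : exists k0 : K, forall b, le lt k0 b.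
Proof.
  destruct inhK as [k]. destruct (min_ex Hwo (fun _ => True)) as [k0 [_ H]]; eauto.
Qed.

Definition k0 : K := epsilon inhK (fun k0 => forall b, le lt k0 b).
Lemma k0_min b : le lt k0 b.
Proof. apply (epsilon_spec inhK (fun k0 => forall b, le lt k0 b) k0_ex). Qed.

Lemma inhM : inhabited M.
Proof.
  apply NNPP; intro H. apply (proj2 Hcard).
  exists (fun b => False_rect _ (match Hsurj b with ex_intro _ z _ => H (inhabits (z k0)) end)).
  intros x. exfalso. destruct (Hsurj x) as [z _]. exact (H (inhabits (z k0))).
Qed.

Definition m0 : M := epsilon inhM (fun _ => True).
Definition root : node lt M := restr lt (fun _ => m0) k0.

Lemma N_root z : N root z.
Proof. intros d h. exfalso. apply (le_not_lt Hwo _ _ (k0_min d) h). Qed.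
Lemma prefix_root w : prefix root w.
Proof. split. apply k0_min. intros d h. exfalso. apply (le_not_lt Hwo _ _ (k0_min d) h). Qed.

Lemma good_root : good root.
Proof.
  intros [g [Hinj _]]. apply (proj2 Hcard).
  exists (fun b => g (proj1_sig b)). intros x y E.
  assert (Hx : Im root (proj1_sig x)).
  { destruct (Hsurj x) as [z Hz]. exists z. split. apply N_root. unfold cz. rewrite Hz. reflexivity. }
  assert (Hy : Im root (proj1_sig y)).
  { destruct (Hsurj y) as [z Hz]. exists z. split. apply N_root. unfold cz. rewrite Hz. reflexivity. }
  specialize (Hinj _ _ Hx Hy E). destruct x, y; simpl in *. subst. f_equal. apply proof_irrelevance.
Qed.

Lemma cont_agree z lam b0 : exists b, le lt b0 b /\
  forall z', N (restr lt z b) z' -> forall d, lt d lam -> cz z' d = cz z d.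
Proof.
  pose (V := fun y : K -> K => forall d, lt d lam -> y d = cz z d).
  assert (HV : open lt V).
  { intros x Hx. exists (restr lt x lam). split. apply N_restr.
    intros y Hy d hd. rewrite <- (Hy d hd). apply Hx, hd. }
  destruct (Hc V HV z) as [s [Hs Hs']]. { intros d hd. reflexivity. }
  destruct (max_ex Hwo b0 (len s)) as [b [Hb1 Hb2]].
  exists b. split; auto. intros z' Hz'. apply Hs'.
  rewrite (N_eq_restr _ _ Hs). eapply (N_shorter Hwo); eauto.
Qed.


Definition inhKM : inhabited (K -> M) := inhabits (fun _ => m0).
Definition zG (t : node lt M) y := epsilon inhKM (fun z => N t z /\ cz z = y /\ forall b, le lt (len t) b -> good (restr lt z b)).
Definition zI (t : node lt M) y := epsilon inhKM (fun z => N t z /\ cz z = y).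
Definition bof (t : node lt M) y := epsilon inhK (fun b => le lt (len t) b /\ bad (restr lt (zI t y) b) /\
   forall b', le lt (len t) b' -> bad (restr lt (zI t y) b') -> le lt b b').
Definition gb (u : node lt M) := epsilon (inhabits (fun _ : K -> K => root)) (fun g =>
  (forall y y', Im u y -> Im u y' -> g y = g y' -> y = y') /\ (forall y, Im u y -> prefix u (g y))).
Definition ubad (t : node lt M) y := restr lt (zI t y) (bof t y).

Lemma zG_spec {t y} : Gd t y -> N t (zG t y) /\ cz (zG t y) = y /\ forall b, le lt (len t) b -> good (restr lt (zG t y) b).
Proof. intro H. exact (epsilon_spec inhKM _ H). Qed.
Lemma zI_spec {t y} : Im t y -> N t (zI t y) /\ cz (zI t y) = y.
Proof. intro H. exact (epsilon_spec inhKM _ H). Qed.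
Lemma bof_spec {t y} : Im t y -> ~ Gd t y -> le lt (len t) (bof t y) /\ bad (ubad t y) /\
   forall b', le lt (len t) b' -> bad (restr lt (zI t y) b') -> le lt (bof t y) b'.
Proof.
  intros H1 H2. destruct (zI_spec H1) as [Hz1 Hz2].
  assert (E : exists b, le lt (len t) b /\ bad (restr lt (zI t y) b)).
  { apply NNPP; intro Hn. apply H2. exists (zI t y). repeat split; auto.
    intros b hb hbad. apply Hn. eauto. }
  destruct (min_ex Hwo _ E) as [b [[hb1 hb2] hb3]].
  assert (E' : exists b, le lt (len t) b /\ bad (restr lt (zI t y) b) /\
   forall b', le lt (len t) b' -> bad (restr lt (zI t y) b') -> le lt b b').
  { exists b. repeat split; auto. }
  exact (epsilon_spec inhK _ E').
Qed.
Lemma gb_spec {u} : bad u -> (forall y y', Im u y -> Im u y' -> gb u y = gb u y' -> y = y') /\ (forall y, Im u y -> prefix u (gb u y)).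
Proof. intro H. exact (epsilon_spec _ _ H). Qed.

Lemma Im_ubad {t y} : Im t y -> Im (ubad t y) y.
Proof. intro H. exists (zI t y). split. apply N_restr. apply (zI_spec H). Qed.

Lemma nonGd_aux {t y y'} : Im t y -> ~ Gd t y -> Im t y' -> ~ Gd t y' ->
  gb (ubad t y) y = gb (ubad t y') y' -> ~ lt (bof t y) (bof t y').
Proof.
  intros I1 G1 I2 G2 E hlt.
  destruct (bof_spec I1 G1) as [b1 [bad1 min1]].
  destruct (bof_spec I2 G2) as [b2 [bad2 min2]].
  pose proof (proj2 (gb_spec bad1) y (Im_ubad I1)) as P1.
  pose proof (proj2 (gb_spec bad2) y' (Im_ubad I2)) as P2.
  rewrite E in P1.
  assert (P : prefix (ubad t y) (ubad t y')).
  { apply (prefix_common Hwo _ _ _ P1 P2). left. exact hlt. }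
  pose proof (prefix_restr_eq Hwo _ _ _ P) as Q.
  change (len (ubad t y)) with (bof t y) in Q.
  assert (H : le lt (bof t y') (bof t y)).
  { apply min2. apply (le_tr Hwo _ _ _ b1). apply le_refl. rewrite <- Q. exact bad1. }
  exact (le_not_lt Hwo _ _ H hlt).
Qed.

Lemma rich {t} : good t -> forall xi (f : K -> (K -> K)), exists y, Gd t y /\ forall e, lt e xi -> f e <> y.
Proof.
  intros Ht xi f. apply NNPP; intro Hn.
  assert (Hcov : forall y, Gd t y -> exists e, lt e xi /\ f e = y).
  { intros y Hy. apply NNPP; intro H'. apply Hn. exists y. split; auto.
    intros e he E. apply H'. eauto. }
  destruct (@wf_choice K lt Hwo K k0 (fun a h v => le lt (len t) v /\ forall b, lt b a -> lt (h b) v))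
    as [sg Hsg].
  { intros a h h' v Hhh [H1 H2]. split; auto. intros b hb. rewrite <- Hhh; auto. }
  { intros a h. destruct (Hreg a (fun b => h (proj1_sig b))) as [g Hg].
    destruct (max_ex Hwo (len t) g) as [m [Hm1 Hm2]]. exists m. split; auto.
    intros b hb. apply (lt_le_tr Hwo _ g); auto. apply (Hg (exist _ b hb)). }
  assert (sg_inj : forall a a', sg a = sg a' -> a = a').
  { intros a a' E. destruct (lt_tri Hwo a a') as [h|[h|h]]; auto; exfalso.
    - pose proof (proj2 (Hsg a') a h) as Q. rewrite E in Q. exact (lt_irr Hwo _ Q).
    - pose proof (proj2 (Hsg a) a' h) as Q. rewrite E in Q. exact (lt_irr Hwo _ Q). }
  pose (eof := fun y => epsilon inhK (fun e => lt e xi /\ f e = y)).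
  assert (Heof : forall y, Gd t y -> lt (eof y) xi /\ f (eof y) = y).
  { intros y Hy. exact (epsilon_spec inhK _ (Hcov y Hy)). }
  apply Ht.
  exists (fun y => if excluded_middle_informative (Gd t y) then restr lt (zG t y) (sg (eof y))
              else gb (ubad t y) y).
  split.
  - intros y y' I1 I2 E.
    destruct (excluded_middle_informative (Gd t y)) as [G1|G1];
    destruct (excluded_middle_informative (Gd t y')) as [G2|G2].
    + apply (f_equal (fun u => len u)) in E. simpl in E. apply sg_inj in E.
      rewrite <- (proj2 (Heof y G1)), <- (proj2 (Heof y' G2)), E. reflexivity.
    + exfalso. destruct (bof_spec I2 G2) as [b2 [bad2 _]].
      pose proof (proj2 (gb_spec bad2) y' (Im_ubad I2)) as P2. rewrite <- E in P2.
      pose proof (prefix_restr_eq Hwo _ _ _ P2) as Q. change (len (ubad t y')) with (bof t y') in Q.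
      rewrite Q in bad2. exact (proj2 (proj2 (zG_spec G1)) _ b2 bad2).
    + exfalso. destruct (bof_spec I1 G1) as [b1 [bad1 _]].
      pose proof (proj2 (gb_spec bad1) y (Im_ubad I1)) as P1. rewrite E in P1.
      pose proof (prefix_restr_eq Hwo _ _ _ P1) as Q. change (len (ubad t y)) with (bof t y) in Q.
      rewrite Q in bad1. exact (proj2 (proj2 (zG_spec G2)) _ b1 bad1).
    + pose proof (nonGd_aux I1 G1 I2 G2 E) as N1.
      pose proof (nonGd_aux I2 G2 I1 G1 (eq_sym E)) as N2.
      assert (Eb : bof t y = bof t y').
      { destruct (lt_tri Hwo (bof t y) (bof t y')) as [h|[h|h]]; tauto. }
      destruct (bof_spec I1 G1) as [b1 [bad1 _]].
      destruct (bof_spec I2 G2) as [b2 [bad2 _]].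
      pose proof (proj2 (gb_spec bad1) y (Im_ubad I1)) as P1.
      pose proof (proj2 (gb_spec bad2) y' (Im_ubad I2)) as P2.
      rewrite E in P1.
      assert (P : prefix (ubad t y) (ubad t y')).
      { apply (prefix_common Hwo _ _ _ P1 P2). simpl. rewrite Eb. apply le_refl. }
      pose proof (prefix_restr_eq Hwo _ _ _ P) as Q.
      change (len (ubad t y)) with (bof t y) in Q. rewrite Eb in Q. fold (ubad t y') in Q.
      rewrite <- Q in E.
      apply (proj1 (gb_spec bad1)); [ | | exact E].
      * apply Im_ubad; auto.
      * rewrite Q. apply Im_ubad; auto.
  - intros y Iy. destruct (excluded_middle_informative (Gd t y)) as [G1|G1].
    + apply N_prefix. apply (zG_spec G1). apply (Hsg _).
    + destruct (bof_spec Iy G1) as [b1 [bad1 _]].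
      apply (prefix_trans Hwo _ (ubad t y)).
      * apply N_prefix. apply (zI_spec Iy). exact b1.
      * apply (gb_spec bad1). apply Im_ubad; auto.
Qed.


Lemma picks {t} : good t -> exists zs : K -> (K -> M),
  (forall a, N t (zs a) /\ forall b, le lt (len t) b -> good (restr lt (zs a) b)) /\
  (forall a a', a' <> a -> cz (zs a') <> cz (zs a)).
Proof.
  intro Ht.
  destruct (@wf_choice K lt Hwo (K -> K) (fun _ => k0)
     (fun a h v => Gd t v /\ forall e, lt e a -> h e <> v)) as [F HF].
  { intros a h h' v Hhh [H1 H2]. split; auto. intros e he. rewrite <- Hhh; auto. }
  { intros a h. apply (rich Ht a h). }
  exists (fun a => zG t (F a)). split.
  - intro a. destruct (zG_spec (proj1 (HF a))) as [H1 [H2 H3]]. auto.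
  - intros a a' hne. rewrite (proj1 (proj2 (zG_spec (proj1 (HF a))))).
    rewrite (proj1 (proj2 (zG_spec (proj1 (HF a'))))).
    destruct (lt_tri Hwo a a') as [h|[h|h]].
    + intro E. apply (proj2 (HF a') a h). auto.
    + congruence.
    + apply (proj2 (HF a) a' h).
Qed.

Lemma sep (p : K -> (K -> K)) : (forall a a', a' <> a -> p a' <> p a) ->
  forall nu, exists g, forall a a', lt a nu -> lt a' nu -> a <> a' -> exists d, lt d g /\ p a d <> p a' d.
Proof.
  intros Hp nu.
  destruct (@cid_fun (K * K) K (fun ab d => fst ab = snd ab \/ p (fst ab) d <> p (snd ab) d)) as [D HD].
  { intros [a a']. simpl. destruct (classic (a = a')) as [h|h]; [exists k0; auto|].
    apply NNPP; intro Hn. apply (Hp a' a); [congruence|].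
    apply functional_extensionality. intro d. apply NNPP; intro h'. apply Hn. exists d. right. auto. }
  destruct (@cid_fun K K (fun a g => forall b : seg lt a, lt (D (proj1_sig b, a)) g)) as [de Hde].
  { intro a. apply (Hreg a (fun b => D (proj1_sig b, a))). }
  destruct (Hreg nu (fun b => de (proj1_sig b))) as [g Hg].
  exists g. intros a a' ha ha' hne.
  destruct (lt_tri Hwo a a') as [h|[h|h]]; [|contradiction|].
  - exists (D (a, a')). split.
    + apply (lt_tr Hwo _ (de a')). apply (Hde a' (exist _ a h)). apply (Hg (exist _ a' ha')).
    + destruct (HD (a, a')) as [E|E]; simpl in *; [contradiction|exact E].
  - exists (D (a', a)). split.
    + apply (lt_tr Hwo _ (de a)). apply (Hde a (exist _ a' h)). apply (Hg (exist _ a ha)).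
    + destruct (HD (a', a)) as [E|E]; simpl in *; [congruence|auto].
Qed.

Definition valid (L : nat -> K) n (x : nat -> K) := forall m, m < n -> lt (x m) (L m).
Definition dep {A} n (F : (nat -> K) -> A) := forall x y, (forall m, m < n -> x m = y m) -> F x = F y.
Definition upd {A} (x : nat -> A) n a := fun m => if Nat.eq_dec m n then a else x m.

Lemma upd_eq {A} (x : nat -> A) n a : upd x n a n = a.
Proof. unfold upd. destruct (Nat.eq_dec n n); congruence. Qed.
Lemma upd_ne {A} (x : nat -> A) n a m : m <> n -> upd x n a m = x m.
Proof. unfold upd. destruct (Nat.eq_dec m n); congruence. Qed.

Lemma bound n L (F : (nat -> K) -> K) : dep n F -> exists B, forall x, valid L n x -> lt (F x) B.
Proof.
  revert F. induction n as [|n IH]; intros F HF.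
  - destruct (HU (F (fun _ => k0))) as [B [_ HB]]. exists B. intros x _.
    rewrite (HF x (fun _ => k0)); auto. intros m hm; lia.
  - pose (P := fun x g => forall b : seg lt (L n), lt (F (upd x n (proj1_sig b))) g).
    pose (H := fun x => epsilon inhK (P x)).
    assert (HH : forall x, P x (H x)).
    { intro x. apply epsilon_spec. apply (Hreg (L n) (fun b => F (upd x n (proj1_sig b)))). }
    assert (Hdep : dep n H).
    { intros x y Hxy. unfold H. f_equal. apply functional_extensionality. intro g.
      apply propositional_extensionality. unfold P.
      assert (E : forall a, F (upd x n a) = F (upd y n a)).
      { intro a. apply HF. intros m hm. destruct (Nat.eq_dec m n) as [->|hne].
        - rewrite !upd_eq. auto.
        - rewrite !upd_ne by auto. apply Hxy. lia. }
      split; intros Hg b; [rewrite <- E | rewrite E]; apply Hg. }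
    destruct (IH H Hdep) as [B HB]. exists B. intros x Hx.
    assert (Ex : upd x n (x n) = x).
    { apply functional_extensionality. intro m. destruct (Nat.eq_dec m n) as [->|hne].
      - apply upd_eq.
      - apply upd_ne; auto. }
    apply (lt_tr Hwo _ (H x)).
    + rewrite <- Ex at 1. apply (HH x (exist _ (x n) (Hx n (Nat.lt_succ_diag_r n)))).
    + apply HB. intros m hm. apply Hx. lia.
Qed.

Definition Inv n (L : nat -> K) (t : (nat -> K) -> node lt M) :=
  (forall m, m <= n -> U (L m)) /\ (forall m, m < n -> lt (L m) (L (S m))) /\ dep n t /\
  (forall x, valid L n x -> good (t x)) /\
  (forall x, valid L n x -> forall z z', N (t x) z -> N (t x) z' -> forall d, lt d (L n) -> cz z d = cz z' d).

Definition Rel n (L : nat -> K) (t : (nat -> K) -> node lt M) L' t' :=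
  (forall m, m <= n -> L' m = L m) /\ (forall x, valid L (S n) x -> prefix (t x) (t' x)) /\
  (forall x y, valid L (S n) x -> valid L (S n) y -> (forall m, m < n -> x m = y m) -> x n <> y n ->
     forall z z', N (t' x) z -> N (t' y) z' -> exists d, lt d (L' (S n)) /\ cz z d <> cz z' d).

Definition Zspec (u : node lt M) (zs : K -> K -> M) :=
  (forall a, N u (zs a) /\ forall b, le lt (len u) b -> good (restr lt (zs a) b)) /\
  (forall a a', a' <> a -> cz (zs a') <> cz (zs a)).
Definition inhZ : inhabited (K -> K -> M) := inhabits (fun _ _ => m0).
Definition Z u := epsilon inhZ (Zspec u).
Lemma Z_spec {u} : good u -> Zspec u (Z u).
Proof. intro H. unfold Z; apply epsilon_spec. apply (picks H). Qed.

Lemma init : exists L t, Inv 0 L t.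
Proof.
  destruct (HU k0) as [lam0 [Ul _]].
  destruct (cont_agree (Z root k0) lam0 (len root)) as [b0 [Hb0 Hb0']].
  exists (fun _ => lam0), (fun _ => restr lt (Z root k0) b0).
  destruct (Z_spec good_root) as [Z1 _].
  refine (conj _ (conj _ (conj _ (conj _ _)))).
  - intros; auto.
  - intros m hm; lia.
  - intros x y _; reflexivity.
  - intros x _. apply (proj2 (Z1 k0)). exact Hb0.
  - intros x _ z z' Hz Hz' d hd. rewrite (Hb0' z Hz d hd), (Hb0' z' Hz' d hd). reflexivity.
Qed.

Lemma step {n L t} : Inv n L t -> exists L' t', Inv (S n) L' t' /\ Rel n L t L' t'.
Proof.
  intros [I1 [I2 [I3 [I4 I5]]]].
  pose (gm := fun u => epsilon inhK (fun g => forall a a', lt a (L n) -> lt a' (L n) -> a <> a' ->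
           exists d, lt d g /\ cz (Z u a) d <> cz (Z u a') d)).
  assert (Hgm : forall u, good u -> forall a a', lt a (L n) -> lt a' (L n) -> a <> a' ->
           exists d, lt d (gm u) /\ cz (Z u a) d <> cz (Z u a') d).
  { intros u Hu. apply (epsilon_spec inhK (fun g => forall a a', lt a (L n) -> lt a' (L n) -> a <> a' ->
           exists d, lt d g /\ cz (Z u a) d <> cz (Z u a') d)).
    apply sep. apply (proj2 (Z_spec Hu)). }
  destruct (bound n L (fun x => gm (t x))) as [B HB].
  { intros x y Hxy. rewrite (I3 x y Hxy). reflexivity. }
  destruct (max_ex Hwo B (L n)) as [m_ [Hm1 Hm2]].
  destruct (HU m_) as [lam' [Ul' Hl']].
  pose (bt := fun u a => epsilon inhK (fun b => le lt (len u) b /\ forall z', N (restr lt (Z u a) b) z' ->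
           forall d, lt d lam' -> cz z' d = cz (Z u a) d)).
  assert (Hbt : forall u a, le lt (len u) (bt u a) /\ forall z', N (restr lt (Z u a) (bt u a)) z' ->
           forall d, lt d lam' -> cz z' d = cz (Z u a) d).
  { intros u a. apply (epsilon_spec inhK (fun b => le lt (len u) b /\ forall z', N (restr lt (Z u a) b) z' ->
           forall d, lt d lam' -> cz z' d = cz (Z u a) d)). apply cont_agree. }
  exists (upd L (S n) lam'), (fun x => restr lt (Z (t x) (x n)) (bt (t x) (x n))).
  assert (VV : forall x, valid (upd L (S n) lam') (S n) x -> valid L (S n) x).
  { intros x Hx m hm. rewrite <- (upd_ne L (S n) lam' m) by lia. apply Hx; auto. }
  assert (Vn : forall x, valid L (S n) x -> valid L n x).
  { intros x Hx m hm. apply Hx. lia. }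
  split; [refine (conj _ (conj _ (conj _ (conj _ _)))) | refine (conj _ (conj _ _))].
  - intros m hm. destruct (Nat.eq_dec m (S n)) as [->|hne].
    + rewrite upd_eq. auto.
    + rewrite upd_ne by auto. apply I1. lia.
  - intros m hm. rewrite upd_ne by lia. destruct (Nat.eq_dec m n) as [->|hne].
    + rewrite upd_eq. apply (le_lt_tr Hwo _ m_); auto.
    + rewrite upd_ne by lia. apply I2. lia.
  - intros x y Hxy. simpl. rewrite (I3 x y) by (intros; apply Hxy; lia).
    rewrite (Hxy n) by lia. reflexivity.
  - intros x Hx. apply (proj2 (proj1 (Z_spec (I4 x (Vn x (VV x Hx)))) (x n))). apply Hbt.
  - intros x _ z z' Hz Hz' d hd. rewrite upd_eq in hd.
    rewrite (proj2 (Hbt _ _) z Hz d hd), (proj2 (Hbt _ _) z' Hz' d hd). reflexivity.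
  - intros m hm. apply upd_ne. lia.
  - intros x Hx. apply N_prefix.
    + apply (proj1 (proj1 (Z_spec (I4 x (Vn x Hx))) (x n))).
    + apply Hbt.
  - intros x y Hx Hy Hxy hne z z' Hz Hz'. simpl in Hz, Hz'.
    assert (Et : t y = t x). { apply I3. intros m hm. symmetry. auto. }
    rewrite Et in Hz'.
    destruct (Hgm (t x) (I4 x (Vn x Hx)) (x n) (y n) (Hx n (Nat.lt_succ_diag_r n))
                (Hy n (Nat.lt_succ_diag_r n)) hne) as [d [hd1 hd2]].
    assert (hd : lt d lam').
    { apply (lt_tr Hwo _ (gm (t x))); [exact hd1|]. apply (lt_tr Hwo _ B); [apply (HB x (Vn x Hx))|].
      apply (le_lt_tr Hwo _ m_); auto. }
    exists d. split. rewrite upd_eq. exact hd.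
    rewrite (proj2 (Hbt _ _) z Hz d hd), (proj2 (Hbt _ _) z' Hz' d hd). exact hd2.
Qed.


Lemma nat_bound (s : nat -> K) : exists g, forall n, lt (s n) g.
Proof.
  pose (sc := fun a => epsilon inhK (fun b => lt a b /\ forall c, lt a c -> le lt b c)).
  assert (Hsc : forall a, lt a (sc a) /\ forall c, lt a c -> le lt (sc a) c).
  { intro a. apply (epsilon_spec inhK (fun b => lt a b /\ forall c, lt a c -> le lt b c)).
    destruct (HU a) as [b [_ hb]].
    destruct (min_ex Hwo (fun b => lt a b) (ex_intro _ b hb)) as [m [Hm1 Hm2]]. eauto. }
  pose (e := fix e n := match n with 0 => k0 | S n => sc (e n) end).
  assert (e_mono : forall n m, n < m -> lt (e n) (e m)).
  { intros n m h. induction h.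
    - apply Hsc.
    - apply (lt_tr Hwo _ (e m)); auto. apply Hsc. }
  assert (e_inj : forall n m, e n = e m -> n = m).
  { intros n m E. destruct (Nat.lt_trichotomy n m) as [h|[h|h]]; auto; exfalso.
    - pose proof (e_mono _ _ h) as Q. rewrite E in Q. exact (lt_irr Hwo _ Q).
    - pose proof (e_mono _ _ h) as Q. rewrite E in Q. exact (lt_irr Hwo _ Q). }
  assert (Ha : exists a, forall n, lt (e n) a).
  { apply NNPP; intro Hn.
    assert (H1 : forall a, exists n, le lt a (e n)).
    { intro a. apply NNPP; intro H'. apply Hn. exists a. intro n.
      apply NNPP; intro H''. apply H'. exists n. apply (not_lt_le Hwo). auto. }
    assert (H2 : forall n k, le lt k (e n) -> exists m, k = e m).
    { induction n as [|n IH]; intros k hk.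
      - exists 0. apply (le_antisym Hwo); auto. apply k0_min.
      - destruct (classic (le lt k (e n))) as [h|h]; auto.
        exists (S n). apply (le_antisym Hwo); auto.
        apply (proj2 (Hsc (e n))). destruct (lt_tri Hwo (e n) k) as [h'|[h'|h']]; auto.
        + exfalso. apply h. right. auto.
        + exfalso. apply h. left. auto. }
    apply Hunc. exists (fun k => epsilon (inhabits 0) (fun n => k = e n)).
    intros x y E.
    assert (Hx : x = e (epsilon (inhabits 0) (fun n => x = e n))).
    { apply (epsilon_spec (inhabits 0) (fun n => x = e n)). destruct (H1 x) as [n hn]. eauto. }
    assert (Hy : y = e (epsilon (inhabits 0) (fun n => y = e n))).
    { apply (epsilon_spec (inhabits 0) (fun n => y = e n)). destruct (H1 y) as [n hn]. eauto. }
    rewrite Hx, Hy, E. reflexivity. }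
  destruct Ha as [a Ha].
  pose (s' := fun b : seg lt a => epsilon (inhabits 0) (fun n => proj1_sig b = e n)).
  destruct (Hreg a (fun b => s (s' b))) as [g Hg]. exists g. intro n.
  pose proof (Hg (exist _ (e n) (Ha n))) as Q.
  assert (E : s' (exist _ (e n) (Ha n)) = n).
  { apply e_inj. symmetry. apply (epsilon_spec (inhabits 0) (fun m => e n = e m)). eauto. }
  simpl in Q. rewrite E in Q. exact Q.
Qed.

Definition St := ((nat -> K) * ((nat -> K) -> node lt M))%type.
Definition initS : {s : St | Inv 0 (fst s) (snd s)}.
Proof.
  destruct (constructive_indefinite_description _ init) as [L HL].
  destruct (constructive_indefinite_description _ HL) as [t Ht].
  exact (exist _ (L, t) Ht).
Defined.
Definition stepS n (s : {s : St | Inv n (fst s) (snd s)}) :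
  {s' : St | Inv (S n) (fst s') (snd s') /\ Rel n (fst (proj1_sig s)) (snd (proj1_sig s)) (fst s') (snd s')}.
Proof.
  destruct (constructive_indefinite_description _ (step (proj2_sig s))) as [L' HL'].
  destruct (constructive_indefinite_description _ HL') as [t' Ht'].
  exact (exist _ (L', t') Ht').
Defined.
Fixpoint build n : {s : St | Inv n (fst s) (snd s)} :=
  match n with
  | 0 => initS
  | S n => let s' := stepS n (build n) in exist _ (proj1_sig s') (proj1 (proj2_sig s'))
  end.

Definition Ls n := fst (proj1_sig (build n)).
Definition ts n := snd (proj1_sig (build n)).
Lemma InvB n : Inv n (Ls n) (ts n).
Proof. exact (proj2_sig (build n)). Qed.
Lemma RelB n : Rel n (Ls n) (ts n) (Ls (S n)) (ts (S n)).
Proof. exact (proj2 (proj2_sig (stepS n (build n)))). Qed.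

Definition lamF m := Ls m m.
Lemma Ls_stable k m : m <= k -> Ls k m = lamF m.
Proof.
  induction k as [|k IH]; intro h.
  - assert (m = 0) by lia. subst. reflexivity.
  - destruct (Nat.eq_dec m (S k)) as [->|hne]; [reflexivity|].
    rewrite (proj1 (RelB k) m) by lia. apply IH. lia.
Qed.
Lemma valid_all k x : (forall m, lt (x m) (lamF m)) -> valid (Ls k) k x.
Proof. intros H m hm. rewrite Ls_stable by lia. apply H. Qed.
Lemma valid_S k x : (forall m, lt (x m) (lamF m)) -> valid (Ls k) (S k) x.
Proof. intros H m hm. rewrite Ls_stable by lia. apply H. Qed.
Lemma lam_lt n : lt (lamF n) (lamF (S n)).
Proof.
  destruct (InvB (S n)) as [_ [I2 _]]. pose proof (I2 n (Nat.lt_succ_diag_r n)) as Q.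
  rewrite Ls_stable in Q by lia. exact Q.
Qed.
Lemma lam_le m n : m <= n -> le lt (lamF m) (lamF n).
Proof.
  induction 1. apply le_refl. apply (le_tr Hwo _ _ _ IHle). left. apply lam_lt.
Qed.

Lemma chain {x} : (forall m, lt (x m) (lamF m)) -> forall n k, n <= k -> prefix (ts n x) (ts k x).
Proof.
  intros Hx n k h. induction h.
  - split. apply le_refl. intros d h1 h2. f_equal. f_equal. apply proof_irrelevance.
  - apply (prefix_trans Hwo _ _ _ IHh). apply (proj1 (proj2 (RelB m))). apply valid_S. auto.
Qed.

Definition zf (xv : nat -> K) : K -> M := fun d => epsilon inhM
  (fun v => exists n (h : lt d (len (ts n xv))), val (ts n xv) (exist _ d h) = v).

Lemma zf_N xv : (forall m, lt (xv m) (lamF m)) -> forall n, N (ts n xv) (zf xv).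
Proof.
  intros Hx n d h. unfold zf.
  pose proof (epsilon_spec inhM (fun v => exists n (h : lt d (len (ts n xv))), val (ts n xv) (exist _ d h) = v)
     (ex_intro _ _ (ex_intro _ n (ex_intro _ h eq_refl)))) as [n' [h' E]].
  rewrite <- E.
  destruct (Nat.le_ge_cases n n') as [hn|hn].
  - apply (proj2 (chain Hx _ _ hn)).
  - symmetry. apply (proj2 (chain Hx _ _ hn)).
Qed.

Lemma seg_eq (a : K) (u v : seg lt a) : proj1_sig u = proj1_sig v -> u = v.
Proof. destruct u, v; simpl; intros ->. f_equal. apply proof_irrelevance. Qed.

Theorem main_thm : exists (lam : nat -> K) (l : K),
    (forall n, U (lam n)) /\
    (forall n, lt (lam n) (lam (S n))) /\
    (forall n, le lt (lam n) l) /\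
    (forall b, (forall n, le lt (lam n) b) -> le lt l b) /\
    exists i : (forall n, seg lt (lam n)) -> (seg lt l -> K),
      (forall x, T (existT (fun a => seg lt a -> K) l (i x))) /\
      (forall x y, i x = i y -> x = y) /\
      (forall x y n,
         (forall m, m < n -> x m = y m) <->
         (forall d (h : lt d l), lt d (lam n) -> i x (exist _ d h) = i y (exist _ d h))).
Proof.
  destruct (nat_bound lamF) as [g Hg].
  destruct (min_ex Hwo (fun b => forall n, le lt (lamF n) b) (ex_intro _ g (fun n => or_introl (Hg n))))
    as [l [Hl1 Hl2]].
  exists lamF, l.
  refine (conj _ (conj lam_lt (conj Hl1 (conj Hl2 _)))).
  { intro n. destruct (InvB n) as [I1 _]. apply I1. lia. }
  pose (xv := fun (x : forall n, seg lt (lamF n)) n => proj1_sig (x n)).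
  assert (Hxv : forall x m, lt (xv x m) (lamF m)). { intros x m. exact (proj2_sig (x m)). }
  pose (i := fun (x : forall n, seg lt (lamF n)) (d : seg lt l) => cz (zf (xv x)) (proj1_sig d)).
  assert (Hiff : forall x y n,
         (forall m, m < n -> x m = y m) <->
         (forall d (h : lt d l), lt d (lamF n) -> i x (exist _ d h) = i y (exist _ d h))).
  { intros x y n. split.
    - intros H d h hd. unfold i; simpl.
      assert (E : ts n (xv x) = ts n (xv y)).
      { destruct (InvB n) as [_ [_ [I3 _]]]. apply I3. intros m hm. unfold xv. rewrite H; auto. }
      destruct (InvB n) as [_ [_ [_ [_ I5]]]].
      apply (I5 (xv x) (valid_all _ _ (Hxv x))).
      + apply zf_N. apply Hxv.
      + rewrite E. apply zf_N. apply Hxv.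
      + rewrite Ls_stable by lia. exact hd.
    - intros H.
      assert (A : forall k, k <= n -> forall m, m < k -> x m = y m).
      { induction k as [|k IH]; intros hk m hm; [lia|].
        destruct (Nat.eq_dec m k) as [->|hne]; [|apply IH; lia].
        apply NNPP; intro hne.
        destruct (RelB k) as [_ [_ R3]].
        destruct (R3 (xv x) (xv y) (valid_S _ _ (Hxv x)) (valid_S _ _ (Hxv y))) with
          (z := zf (xv x)) (z' := zf (xv y)) as [d [hd1 hd2]].
        - intros m2 hm2. unfold xv. rewrite (IH (ltac:(lia)) m2 hm2). reflexivity.
        - intro E. apply hne. apply seg_eq. exact E.
        - apply zf_N. apply Hxv.
        - apply zf_N. apply Hxv.
        - change (Ls (S k) (S k)) with (lamF (S k)) in hd1.
          assert (hdn : lt d (lamF n)). { apply (lt_le_tr Hwo _ _ _ hd1). apply lam_le. lia. }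
          assert (hdl : lt d l). { apply (lt_le_tr Hwo _ _ _ hdn). apply Hl1. }
          apply hd2. exact (H d hdl hdn). }
      apply (A n (le_n n)). }
  exists i. split; [|split].
  - intro x. exact (proj2_sig (c (zf (xv x))) l).
  - intros x y E. apply functional_extensionality_dep. intro m.
    apply (proj2 (Hiff x y (S m))).
    + intros d h _. rewrite E. reflexivity.
    + lia.
  - exact Hiff.
Qed.

End Main.

Theorem theorem7p1
  (K : Type) (lt : K -> K -> Prop)
  (Hkappa : uncountable_regular_cardinal lt)
  (U : K -> Prop) (HU : unbounded lt U)
  (T : node lt K -> Prop) (HT : subtree T)
  (M : Type)
  (Hcard : lt_card (node lt M) (branches T))
  (c : (K -> M) -> branches T)
  (Hc : continuous c)
  (Hsurj : forall b : branches T, exists z, c z = b) :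
  exists (lam : nat -> K) (l : K),
    (forall n, U (lam n)) /\
    (forall n, lt (lam n) (lam (S n))) /\
    (forall n, le lt (lam n) l) /\
    (forall b, (forall n, le lt (lam n) b) -> le lt l b) /\
    exists i : (forall n, seg lt (lam n)) -> (seg lt l -> K),
      (forall x, T (existT (fun a => seg lt a -> K) l (i x))) /\
      (forall x y, i x = i y -> x = y) /\
      (forall x y n,
         (forall m, m < n -> x m = y m) <->
         (forall d (h : lt d l), lt d (lam n) -> i x (exist _ d h) = i y (exist _ d h))).
Proof.
  destruct Hkappa as [Hwo [_ [Hunc Hreg]]].
  eapply main_thm; eauto.
Qed.
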